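(* For any $n\ge2$ and $A>0$, there exists $f\in C^2[-1,1]$ with $f\le0$ on $[-1,0]$ and $f\ge0$ on $[0,1]$, such that every algebraic polynomial $P_n$ of degree $\le n$ with $P_n\le0$ on $[-1,0]$, $P_n\ge0$ on $[0,1]$ and $P_n^{(i)}(0)=f^{(i)}(0)$ for $0\le i\le2$ obeys $$\|f-P_n\|>A\,\|f''\|.$$
   Context: $\|\cdot\|$ is the sup norm on $[-1,1]$. *)

(* Defs.v *)
From Stdlib Require Import Reals.
From Coquelicot Require Import Coquelicot.
Open Scope R_scope.

(* f is of class C^2 (we ask this on all of R). *)
Definition C2 (f : R -> R) : Prop :=
  forall x : R, ex_derive f x /\ ex_derive (Derive f) x /\
                continuous (Derive_n f 2) x.

Definition supnorm (h : R -> R) : Rbar :=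
  Lub_Rbar (fun y => exists x, -1 <= x <= 1 /\ y = Rabs (h x)).

Definition poly_eval (n : nat) (c : nat -> R) (x : R) : R :=
  sum_n (fun k => c k * x ^ k) n.

(* Main.v *)
Require Import Defs.
From Stdlib Require Import Reals Lra Lia Psatz FunctionalExtensionality.
From Coquelicot Require Import Coquelicot.
Open Scope R_scope.

Lemma sumS (u : nat -> R) n : sum_n u (S n) = sum_n u n + u (S n).
Proof. rewrite sum_Sn. reflexivity. Qed.

Lemma deriv_sum (a : nat -> R) (e : nat -> nat) n x :
  is_derive (fun x => sum_n (fun k => a k * x ^ (e k)) n) x
            (sum_n (fun k => a k * INR (e k) * x ^ pred (e k)) n).
Proof.
  induction n.
  - rewrite sum_O. apply is_derive_ext with (fun x => a 0%nat * x ^ (e 0%nat)).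
    { intro t. rewrite sum_O. reflexivity. }
    replace (a 0%nat * INR (e 0%nat) * x ^ pred (e 0%nat)) with
      (a 0%nat * (INR (e 0%nat) * 1 * x ^ pred (e 0%nat))) by ring.
    apply is_derive_scal. exact (is_derive_pow (fun t => t) _ x 1 (is_derive_id x)).
  - rewrite sumS.
    apply is_derive_ext with (fun x => plus (sum_n (fun k => a k * x ^ (e k)) n) (a (S n) * x ^ (e (S n)))).
    { intro t. rewrite sumS. reflexivity. }
    match goal with |- is_derive _ _ (?u + ?v) => change (u+v) with (plus u v) end.
    apply (@is_derive_plus R_AbsRing R_NormedModule); [exact IHn|].
    replace (a (S n) * INR (e (S n)) * x ^ pred (e (S n))) with
      (a (S n) * (INR (e (S n)) * 1 * x ^ pred (e (S n)))) by ring.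
    apply is_derive_scal. exact (is_derive_pow (fun t => t) _ x 1 (is_derive_id x)).
Qed.

Lemma sum_single (g : nat -> R) j n : (j <= n)%nat -> (forall k, k <> j -> g k = 0) ->
  sum_n g n = g j.
Proof.
  intros Hj Hg. change (@eq R (sum_n g n) (g j)). induction n.
  - rewrite sum_O. assert (j = 0%nat) by lia. subst. reflexivity.
  - destruct (Nat.eq_dec j (S n)).
    + subst. rewrite sumS. replace (sum_n g n) with 0. ring.
      clear Hj. assert (forall m, (m <= n)%nat -> @eq R (sum_n g m) 0).
      { induction m; intros. rewrite sum_O. apply Hg. lia.
        rewrite sumS, IHm. rewrite Hg. ring. lia. lia. }
      symmetry; apply H; lia.
    + rewrite sumS, IHn. rewrite (Hg (S n)). ring. auto. lia.
Qed.

Lemma poly_D1 n c : Derive (poly_eval n c) = fun x => sum_n (fun k => c k * INR k * x ^ pred k) n.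
Proof.
  apply functional_extensionality; intro x. apply is_derive_unique.
  exact (deriv_sum c (fun k => k) n x).
Qed.

Lemma poly_D2 n c : Derive (Derive (poly_eval n c)) =
   fun x => sum_n (fun k => c k * INR k * INR (pred k) * x ^ pred (pred k)) n.
Proof.
  rewrite poly_D1.
  apply functional_extensionality; intro x. apply is_derive_unique.
  exact (deriv_sum (fun k => c k * INR k) pred n x).
Qed.

Lemma poly_at0 n c : (2 <= n)%nat ->
  Derive_n (poly_eval n c) 0 0 = c 0%nat /\
  Derive_n (poly_eval n c) 1 0 = c 1%nat /\
  Derive_n (poly_eval n c) 2 0 = 2 * c 2%nat.
Proof.
  intros Hn. split; [|split].
  - simpl. unfold poly_eval. rewrite (sum_single _ 0). simpl; ring. lia.
    intros k Hk. destruct k. lia. simpl. ring.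
  - simpl. rewrite poly_D1. rewrite (sum_single _ 1). simpl; ring. lia.
    intros k Hk. destruct k. simpl; ring. destruct k. lia. simpl. ring.
  - simpl Derive_n. rewrite poly_D2. rewrite (sum_single _ 2). simpl; ring. lia.
    intros k Hk. destruct k. simpl; ring. destruct k. simpl; ring. destruct k. lia. simpl. ring.
Qed.


Lemma sum_scale_id (c : nat -> R) (a y : R) n :
  @eq R (sum_n (fun k => c k * (1 - a * (/2)^k) * y^k) n)
   (sum_n (fun k => c k * y^k) n - a * sum_n (fun k => c k * (y/2)^k) n).
Proof.
  induction n.
  - rewrite !sum_O. unfold Rdiv. rewrite Rpow_mult_distr. ring.
  - rewrite !sumS, IHn. unfold Rdiv. rewrite !Rpow_mult_distr. ring.
Qed.

Lemma sum_bound (u : nat -> R) M n : (forall k, (k <= n)%nat -> Rabs (u k) <= M) ->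
  Rabs (sum_n u n) <= INR (S n) * M.
Proof.
  induction n; intros H.
  - rewrite sum_O. simpl. specialize (H 0%nat (le_n _)). lra.
  - rewrite sumS. rewrite S_INR.
    eapply Rle_trans. apply Rabs_triang.
    assert (Rabs (sum_n u n) <= INR (S n) * M) by (apply IHn; intros; apply H; lia).
    specialize (H (S n) (le_n _)). lra.
Qed.

Lemma pow_half_ge (n k : nat) : (k <= n)%nat -> 2 <= 2 ^ (S n) * (/2)^k.
Proof.
  intros Hk. replace (S n) with ((S n - k) + k)%nat by lia.
  rewrite pow_add, Rmult_assoc, <- Rpow_mult_distr, Rinv_r, pow1 by lra.
  rewrite Rmult_1_r. replace (S n - k)%nat with (S (n - k)) by lia.
  simpl. assert (1 <= 2 ^ (n-k)) by (apply pow_R1_Rle; lra). lra.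
Qed.

Lemma coef_bound n : exists K, 0 < K /\ forall c B,
  (forall x, 0 <= x <= 1 -> Rabs (poly_eval n c x) <= B) ->
  forall k, (k <= n)%nat -> Rabs (c k) <= K * B.
Proof.
  induction n.
  - exists 1. split. lra. intros c B H k Hk.
    assert (k = 0%nat) by lia. subst. specialize (H 0 ltac:(lra)).
    unfold poly_eval in H. rewrite sum_O in H. simpl in H. rewrite Rmult_1_r in H. lra.
  - destruct IHn as [K [HK IH]].
    set (K1 := K * (1 + 2 ^ S n)).
    assert (HK1 : 0 < K1) by (unfold K1; pose proof (pow_lt 2 (S n)); nra).
    exists (1 + INR (S n) * K1 + K1). split.
    { pose proof (pos_INR (S n)). nra. }
    intros c B H.
    assert (HB : 0 <= B) by (specialize (H 0 ltac:(lra)); pose proof (Rabs_pos (poly_eval (S n) c 0)); lra).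
    set (c' := fun k => c k * (1 - 2 ^ S n * (/2)^k)).
    assert (Hc' : forall k, (k <= n)%nat -> Rabs (c' k) <= K1 * B).
    { intros k Hk. unfold K1. rewrite Rmult_assoc. apply IH; auto.
      intros x Hx. unfold poly_eval, c'.
      rewrite sum_scale_id.
      assert (E: forall y, @eq R (sum_n (fun k0 : nat => c k0 * y ^ k0) n) (poly_eval (S n) c y - c (S n) * y ^ S n)).
      { intro y. unfold poly_eval. rewrite sumS. unfold Rminus. rewrite Rplus_assoc, Rplus_opp_r, Rplus_0_r; reflexivity. }
      rewrite !E.
      replace (poly_eval (S n) c x - c (S n) * x ^ S n -
        2 ^ S n * (poly_eval (S n) c (x / 2) - c (S n) * (x / 2) ^ S n))
        with (poly_eval (S n) c x - 2 ^ S n * poly_eval (S n) c (x / 2)).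
      2:{ unfold Rdiv. rewrite Rpow_mult_distr. rewrite <- Rinv_pow by lra.
          field. apply pow_nonzero. lra. }
      eapply Rle_trans. apply Rabs_triang. rewrite Rabs_Ropp, Rabs_mult.
      rewrite (Rabs_right (2 ^ S n)) by (apply Rle_ge, pow_le; lra).
      pose proof (H x Hx). pose proof (H (x/2) ltac:(lra)).
      pose proof (pow_lt 2 (S n)). nra. }
    assert (Hck : forall k, (k <= n)%nat -> Rabs (c k) <= K1 * B).
    { intros k Hk. apply Rle_trans with (Rabs (c' k)); [|apply Hc'; auto]. unfold c'.
      rewrite Rabs_mult. pose proof (pow_half_ge n k Hk).
      rewrite (Rabs_left1 (1 - _)) by lra. pose proof (Rabs_pos (c k)). nra. }
    intros k Hk. destruct (Nat.eq_dec k (S n)).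
    + subst. pose proof (H 1 ltac:(lra)). unfold poly_eval in H0. rewrite sumS in H0.
      assert (Rabs (sum_n (fun k : nat => c k * 1 ^ k) n) <= INR (S n) * (K1 * B)).
      { apply sum_bound. intros. rewrite pow1, Rmult_1_r. auto. }
      rewrite pow1, Rmult_1_r in H0.
      set (S0 := sum_n (fun k : nat => c k * 1 ^ k) n) in *.
      pose proof (Rabs_triang (S0 + c (S n)) (- S0)) as H2.
      replace (S0 + c (S n) + - S0) with (c (S n)) in H2 by ring.
      rewrite Rabs_Ropp in H2. simpl in H0.
      assert (0 <= K1 * B) by nra. pose proof (pos_INR (S n)). nra.
    + pose proof (Hck k ltac:(lia)). pose proof (pos_INR (S n)).
      assert (0 <= INR (S n) * K1 * B) by (apply Rmult_le_pos; [apply Rmult_le_pos|]; lra). nra.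
Qed.


Definition fQ (e x : R) := e*x - e^2 + e^4/(e^2+x^2).
Definition f1 (e x : R) := e - 2*e^4*x/(e^2+x^2)^2.
Definition f2 (e x : R) := e^4*(6*x^2 - 2*e^2)/(e^2+x^2)^3.

Lemma fQ_d e x : 0 < e -> is_derive (fQ e) x (f1 e x).
Proof.
  intros He. unfold fQ, f1. assert (0 < e^2 + x^2) by nra.
  auto_derive. lra. field. lra.
Qed.

Lemma f1_d e x : 0 < e -> is_derive (f1 e) x (f2 e x).
Proof.
  intros He. unfold f1, f2. assert (0 < e^2 + x^2) by nra.
  auto_derive. { assert (0 < (e*(e*1)+x*(x*1))) by nra. apply Rgt_not_eq. apply Rmult_lt_0_compat; lra. } field. lra.
Qed.

Lemma DfQ e : 0 < e -> Derive (fQ e) = f1 e.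
Proof. intros; apply functional_extensionality; intro; apply is_derive_unique, fQ_d; auto. Qed.
Lemma Df1 e : 0 < e -> Derive (f1 e) = f2 e.
Proof. intros; apply functional_extensionality; intro; apply is_derive_unique, f1_d; auto. Qed.

Lemma D2fQ e x : 0 < e -> Derive_n (fQ e) 2 x = f2 e x.
Proof.
  intros He. change (Derive (Derive (fQ e)) x = f2 e x). rewrite DfQ, Df1 by auto. reflexivity.
Qed.

Lemma C2fQ e : 0 < e -> C2 (fQ e).
Proof.
  intros He x. split; [|split].
  - eexists. apply fQ_d; auto.
  - rewrite DfQ by auto. eexists. apply f1_d; auto.
  - assert (Derive_n (fQ e) 2 = f2 e) by (apply functional_extensionality; intro; apply D2fQ; auto).
    rewrite H. apply (@ex_derive_continuous R_AbsRing R_NormedModule). unfold f2. assert (0 < e^2 + x^2) by nra.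
    auto_derive. assert (0 < (e*(e*1)+x*(x*1))) by nra. apply Rgt_not_eq.
    repeat apply Rmult_lt_0_compat; lra.
Qed.

Lemma f2_bound e x : 0 < e -> Rabs (f2 e x) <= 2.
Proof.
  intros He. unfold f2. set (a := e^2). set (s := x^2).
  assert (0 < a) by (unfold a; nra). assert (0 <= s) by (unfold s; nra).
  replace (e^4) with (a^2) by (unfold a; ring).
  assert (0 < (a+s)^3) by (apply pow_lt; lra).
  unfold Rdiv. rewrite Rabs_mult, Rabs_inv, (Rabs_right ((a+s)^3)) by lra.
  apply Rmult_le_reg_r with ((a+s)^3). lra.
  rewrite Rmult_assoc, Rinv_l, Rmult_1_r by lra.
  rewrite Rabs_mult, (Rabs_right (a^2)) by nra.
  assert (0 <= a^2 * s) by nra.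
  assert (E: (a+s)^3 = a^3 + 3*a^2*s + 3*a*s^2 + s^3) by ring. rewrite E.
  assert (0 <= a*s^2) by nra. assert (0 <= s^3) by (apply pow_le; lra).
  assert (0 < a^3) by (apply pow_lt; lra).
  destruct (Rcase_abs (6*s-2*a)).
  - rewrite Rabs_left by lra. nra.
  - rewrite Rabs_right by lra. nra.
Qed.

Lemma fQ_bound e x : 0 < e <= 1 -> -1 <= x <= 1 -> Rabs (fQ e x) <= 2*e.
Proof.
  intros He Hx. assert (0 < e^2+x^2) by nra.
  assert (E: fQ e x = e*x - e^2*x^2/(e^2+x^2)) by (unfold fQ; field; lra).
  rewrite E. assert (0 <= e^2*x^2/(e^2+x^2) <= e^2).
  { split. apply Rdiv_le_0_compat; nra. apply Rmult_le_reg_r with (e^2+x^2). lra.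
    unfold Rdiv. rewrite Rmult_assoc, Rinv_l, Rmult_1_r by lra. nra. }
  apply Rabs_le. split; nra.
Qed.

Lemma fQ_sign e x : 0 < e -> fQ e x * (e^2+x^2) = e*x*(e^2 - e*x + x^2).
Proof. intros. unfold fQ. field. nra. Qed.

Lemma fQ_neg e x : 0 < e -> x <= 0 -> fQ e x <= 0.
Proof.
  intros He Hx. pose proof (fQ_sign e x He). assert (0 < e^2+x^2) by nra.
  assert (0 < e^2 - e*x + x^2) by nra.
  destruct (Rle_dec (fQ e x) 0); auto. assert (e*x <= 0) by nra. nra.
Qed.

Lemma fQ_pos e x : 0 < e -> 0 <= x -> 0 <= fQ e x.
Proof.
  intros He Hx. pose proof (fQ_sign e x He). assert (0 < e^2+x^2) by nra.
  assert (0 < e^2 - e*x + x^2) by nra.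
  destruct (Rle_dec 0 (fQ e x)); auto. assert (0 <= e*x) by nra. nra.
Qed.

Lemma fQ_at0 e : 0 < e ->
  Derive_n (fQ e) 0 0 = 0 /\ Derive_n (fQ e) 1 0 = e /\ Derive_n (fQ e) 2 0 = -2.
Proof.
  intros He. split; [|split].
  - simpl. unfold fQ. field. lra.
  - simpl. change (Derive (fQ e) 0 = e). rewrite DfQ by auto. unfold f1. field. lra.
  - rewrite D2fQ by auto. unfold f2. field. lra.
Qed.



Lemma tail_eq c t m : poly_eval (m+2) c t = c 0%nat + c 1%nat * t + c 2%nat * t^2 +
   sum_n (fun k => if (k <? 3)%nat then 0 else c k * t^k) (m+2).
Proof.
  unfold poly_eval. induction m.
  - change (0+2)%nat with 2%nat. rewrite !sumS, !sum_O. simpl. ring.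
  - replace (S m + 2)%nat with (S (m+2)) by lia. rewrite !sumS, IHm.
    replace (S (m+2) <? 3)%nat with false. simpl. ring.
    symmetry. apply Nat.ltb_ge. lia.
Qed.

Lemma tail_bound n c t M : (2 <= n)%nat -> 0 <= t <= 1 ->
  (forall k, (k <= n)%nat -> Rabs (c k) <= M) ->
  Rabs (poly_eval n c t - (c 0%nat + c 1%nat * t + c 2%nat * t^2)) <= INR (S n) * (M * t^3).
Proof.
  intros Hn Ht Hc. replace n with ((n-2)+2)%nat by lia. rewrite tail_eq.
  set (T := sum_n (fun k : nat => if (k <? 3)%nat then 0 else c k * t ^ k) (n - 2 + 2)).
  assert (G: forall a b : R, a + b - a = b) by (intros; ring). rewrite G.
  unfold T.
  apply sum_bound. intros k Hk.
  assert (0 <= M) by (specialize (Hc 0%nat ltac:(lia)); pose proof (Rabs_pos (c 0%nat)); lra).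
  assert (0 <= t^3) by (apply pow_le; lra).
  destruct (k <? 3)%nat eqn:Ek.
  - rewrite Rabs_R0. nra.
  - apply Nat.ltb_ge in Ek. rewrite Rabs_mult, (Rabs_right (t^k)) by (apply Rle_ge, pow_le; lra).
    assert (t^k <= t^3).
    { replace k with (3 + (k-3))%nat by lia. rewrite pow_add.
      assert (t^(k-3) <= 1) by (rewrite <- (pow1 (k-3)); apply pow_incr; lra).
      assert (0 <= t^(k-3)) by (apply pow_le; lra). nra. }
    pose proof (Rabs_pos (c k)). specialize (Hc k ltac:(lia)).
    assert (0 <= t^k) by (apply pow_le; lra). nra.
Qed.


Lemma sup_ge h x : -1 <= x <= 1 -> Rbar_le (Finite (Rabs (h x))) (supnorm h).
Proof.
  intros Hx. unfold supnorm. destruct (Lub_Rbar_correct (fun y => exists x, -1 <= x <= 1 /\ y = Rabs (h x))) as [ub _].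
  apply ub. exists x. auto.
Qed.

Lemma sup_le h M : (forall x, -1 <= x <= 1 -> Rabs (h x) <= M) ->
  exists m, supnorm h = Finite m /\ m <= M.
Proof.
  intros H. pose proof (sup_ge h 0 ltac:(lra)) as H0.
  unfold supnorm in *. destruct (Lub_Rbar_correct (fun y => exists x, -1 <= x <= 1 /\ y = Rabs (h x))) as [_ lub].
  assert (Hl : Rbar_le (Lub_Rbar (fun y => exists x, -1 <= x <= 1 /\ y = Rabs (h x))) (Finite M)).
  { apply lub. intros y [x [Hx ->]]. simpl. auto. }
  destruct (Lub_Rbar (fun y => exists x, -1 <= x <= 1 /\ y = Rabs (h x))); simpl in *.
  - exists r. auto.
  - contradiction.
  - contradiction.
Qed.

Theorem lemma3p12 (n : nat) (A : R) :
  (2 <= n)%nat -> 0 < A ->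
  exists f : R -> R,
    C2 f /\
    (forall x, -1 <= x <= 0 -> f x <= 0) /\
    (forall x, 0 <= x <= 1 -> 0 <= f x) /\
    forall c : nat -> R,
      (forall x, -1 <= x <= 0 -> poly_eval n c x <= 0) ->
      (forall x, 0 <= x <= 1 -> 0 <= poly_eval n c x) ->
      (forall i : nat, (i <= 2)%nat ->
         Derive_n (poly_eval n c) i 0 = Derive_n f i 0) ->
      Rbar_lt (Rbar_mult (Finite A) (supnorm (Derive_n f 2)))
              (supnorm (fun x => f x - poly_eval n c x)).
Proof.
  intros Hn HA. destruct (coef_bound n) as [K [HK HKb]].
  set (L := 4 * INR (S n) * K).
  assert (HL : 0 < L) by (unfold L; pose proof (lt_0_INR (S n) ltac:(lia)); nra).
  set (D := L * (2*A+1) + 4).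
  assert (HD : 4 < D) by (unfold D; nra).
  set (e := / D).
  assert (He : 0 < e) by (unfold e; apply Rinv_0_lt_compat; lra).
  assert (HeD : e * D = 1) by (unfold e; field; lra).
  assert (He4 : e <= 1/4) by nra.
  assert (HLe : L * e * (2*A+1) < 1) by (unfold D in HeD; nra).
  exists (fQ e). split; [apply C2fQ; auto|]. split; [intros; apply fQ_neg; lra|].
  split; [intros; apply fQ_pos; lra|].
  intros c Hneg Hpos Hder.
  destruct (poly_at0 n c Hn) as [P0 [P1 P2]].
  destruct (fQ_at0 e He) as [F0 [F1 F2]].
  assert (c0 : c 0%nat = 0) by (rewrite <- P0, Hder, F0 by lia; reflexivity).
  assert (c1 : c 1%nat = e) by (rewrite <- P1, Hder, F1 by lia; reflexivity).
  assert (c2 : c 2%nat = -1) by (pose proof (Hder 2%nat (le_n _)); lra).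
  destruct (sup_le (Derive_n (fQ e) 2) 2) as [m [Hm Hm2]].
  { intros x _. rewrite D2fQ by auto. apply f2_bound; auto. }
  rewrite Hm. simpl.
  assert (Hm0 : 0 <= m).
  { pose proof (sup_ge (Derive_n (fQ e) 2) 0 ltac:(lra)). rewrite Hm in H.
    apply Rle_trans with (Rabs (Derive_n (fQ e) 2 0)); [apply Rabs_pos| exact H]. }
  pose proof (sup_ge (fun x => fQ e x - poly_eval n c x) 0 ltac:(lra)) as H0.
  destruct (supnorm (fun x => fQ e x - poly_eval n c x)) as [s| |] eqn:Hs; [| simpl; auto | destruct H0].
  set (B := s + 2*e).
  assert (HPb : forall x, 0 <= x <= 1 -> Rabs (poly_eval n c x) <= B).
  { intros x Hx. pose proof (sup_ge (fun x => fQ e x - poly_eval n c x) x ltac:(lra)) as Hx'.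
    rewrite Hs in Hx'. assert (Ha : Rabs (fQ e x - poly_eval n c x) <= s) by exact Hx'. pose proof (fQ_bound e x ltac:(lra) ltac:(lra)) as Hb.
    pose proof (Rabs_triang (fQ e x) (-(fQ e x - poly_eval n c x))) as Hc.
    replace (fQ e x + -(fQ e x - poly_eval n c x)) with (poly_eval n c x) in Hc by ring.
    rewrite Rabs_Ropp in Hc.
    unfold B. lra. }
  pose proof (HKb c B HPb) as Hck.
  pose proof (tail_bound n c (2*e) (K*B) Hn ltac:(lra) Hck) as Ht.
  rewrite c0, c1, c2 in Ht.
  pose proof (Hpos (2*e) ltac:(lra)) as Hp.
  assert (HB : 0 <= B) by (pose proof (HPb 0 ltac:(lra)); pose proof (Rabs_pos (poly_eval n c 0)); lra).
  apply Rabs_le_between in Ht.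
  assert (Hk : 2*e^2 <= INR (S n) * (K * B * (2*e)^3)) by nra.
  assert (Hk2 : 1 <= L * B * e).
  { unfold L. apply Rmult_le_reg_r with (2*e^2). nra.
    replace (INR (S n) * (K * B * (2*e)^3)) with (4 * INR (S n) * K * B * e * (2*e^2)) in Hk by ring.
    lra. }
  assert (HB2 : 2*A+1 < B).
  { destruct (Rlt_le_dec (2*A+1) B); auto.
    assert (L * B * e <= L * (2*A+1) * e) by (apply Rmult_le_compat_r; [lra|]; apply Rmult_le_compat_l; lra).
    lra. }
  unfold B in HB2. simpl. nra.
Qed.
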